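(* Let $b_x,b_y,u_x,u_y,K,\beta$ be positive constants with $u_y>u_x$ and $b_x\geq b_y$, let $h>0$, and set \[ \phi_1(h)=\frac{b_y\left\{1-\exp\left(-\frac{\beta K u_y}{b_y}h\right)\right\}}{\beta K u_y},\qquad \phi_2(h)=h . \] Consider the discrete system \[ X_{n+1}=\frac{X_n(1+\phi_1(h)b_x)}{1+\phi_1(h)\left(\frac{b_x}{K}X_n+\frac{b_x}{K}Y_n+u_x+\beta Y_n\right)},\qquad Y_{n+1}=\frac{Y_n\{1+\phi_2(h)(b_y+\beta X_n)\}}{1+\phi_2(h)\left(\frac{b_y}{K}X_n+\frac{b_y}{K}Y_n+u_y\right)} . \] Let $\bar X=K(1-u_x/b_x)$, $\bar Y=K(1-u_y/b_y)$, $R_0=\frac{b_y}{b_x}\frac{u_x}{u_y}+\frac{\beta}{u_y}\bar X$, and $E_H^*=(X_H^*,Y_H^* )$ with \[ X_H^*=\frac{b_xu_y-b_yu_x-\beta K(b_y-u_y)}{\beta(\beta K+b_x-b_y)},\qquad Y_H^*=\frac{b_yu_x-b_xu_y+\beta K(b_x-u_x)}{\beta(\beta K+b_x-b_y)} . \] Then, for every $h>0$, the system is locally asymptotically stable around the fixed point (i) $E_0^H=(0,0)$ if $b_x<u_x$ and $b_y<u_y$; (ii) $E_1^H=(\bar X,0)$ if $b_x>u_x$ and $R_0<1$; (iii) $E_2^H=(0,\bar Y)$ if $b_y>u_y$ and $\frac{b_xu_y}{b_y}<u_x+\beta K\left(1-\frac{u_y}{b_y}\right)$; (iv) $E_H^*$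 if $b_x>u_x$, $b_y>u_y$, $\frac{b_xu_y}{b_y}>u_x+\beta K\left(1-\frac{u_y}{b_y}\right)$ and $R_0>1$.
   Context: This is a nonstandard finite-difference discretization (step size $h$) of a host–parasite model with horizontal and perfect vertical transmission; $X,Y$ are uninfected and infected host densities, $b_x,b_y$ birth rates, $u_x,u_y$ death rates, $K$ carrying capacity, $\beta$ transmission coefficient. The paper assumes throughout that $u_y>u_x$ and $b_x\geq b_y$. A fixed point of the map is called (locally asymptotically) stable if both eigenvalues of the Jacobian of the map at the fixed point have modulus strictly less than $1$. *)

(* Defs.v *)
From Stdlib Require Import Reals.
From Coquelicot Require Import Coquelicot.
Open Scope R_scope.

Definition phi1 (bX bY uX uY K beta h : R) : R :=
  bY * (1 - exp (- (beta * K * uY / bY) * h)) / (beta * K * uY).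

Definition phi2 (h : R) : R := h.

Definition mapX (bX bY uX uY K beta h : R) (X Y : R) : R :=
  let p := phi1 bX bY uX uY K beta h in
  X * (1 + p * bX) / (1 + p * (bX / K * X + bX / K * Y + uX + beta * Y)).

Definition mapY (bX bY uX uY K beta h : R) (X Y : R) : R :=
  let p := phi2 h in
  Y * (1 + p * (bY + beta * X)) / (1 + p * (bY / K * X + bY / K * Y + uY)).

Definition is_eigenvalue2 (a b c d : R) (l : C) : Prop :=
  ((RtoC a - l) * (RtoC d - l) - RtoC b * RtoC c)%C = RtoC 0.

Definition las_fixed_point (f g : R -> R -> R) (X0 Y0 : R) : Prop :=
  f X0 Y0 = X0 /\ g X0 Y0 = Y0 /\
  forall l : C,
    is_eigenvalue2 (Derive (fun x => f x Y0) X0) (Derive (fun y => f X0 y) Y0)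
                   (Derive (fun x => g x Y0) X0) (Derive (fun y => g X0 y) Y0) l ->
    Cmod l < 1.

Definition Xbar (bX uX K : R) : R := K * (1 - uX / bX).
Definition Ybar (bY uY K : R) : R := K * (1 - uY / bY).
Definition basicR0 (bX bY uX uY K beta : R) : R :=
  bY / bX * (uX / uY) + beta / uY * Xbar bX uX K.
Definition XHstar (bX bY uX uY K beta : R) : R :=
  (bX * uY - bY * uX - beta * K * (bY - uY)) / (beta * (beta * K + bX - bY)).
Definition YHstar (bX bY uX uY K beta : R) : R :=
  (bY * uX - bX * uY + beta * K * (bX - uX)) / (beta * (beta * K + bX - bY)).

(* Main.v *)
Require Import Defs.
From Stdlib Require Import Reals Lra Psatz.
From Coquelicot Require Import Coquelicot.
Open Scope R_scope.
Lemma jury (a b c d : R) (l : C) :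
  1 - (a+d) + (a*d - b*c) > 0 -> 1 + (a+d) + (a*d-b*c) > 0 -> a*d - b*c < 1 ->
  is_eigenvalue2 a b c d l -> Cmod l < 1.
Proof.
  intros H1 H2 H3 H. destruct l as [x y]. unfold is_eigenvalue2 in H.
  pose proof (f_equal fst H) as Hr. pose proof (f_equal snd H) as Hi.
  unfold Cminus, Cmult, Cplus, Copp, RtoC in Hr, Hi; simpl in Hr, Hi.
  unfold Cmod; simpl. apply Rlt_le_trans with (sqrt 1); [|rewrite sqrt_1; lra].
  apply sqrt_lt_1_alt. split; [nra|].
  assert (Hy : y * (a + d - 2*x) = 0) by nra.
  apply Rmult_integral in Hy. destruct Hy as [Hy|Hy].
  - subst y. assert (E : x*x - (a+d)*x + (a*d-b*c) = 0) by nra.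
    destruct (Rlt_or_le x 1); destruct (Rlt_or_le (-1) x); try nra.
  - nra.
Qed.
Section D.
Variables bX bY uX uY K beta h : R.
Hypothesis HK : K <> 0.
Let p := phi1 bX bY uX uY K beta h.
Let q := phi2 h.

Lemma dfX X Y : 1 + p * (bX / K * X + bX / K * Y + uX + beta * Y) <> 0 ->
  Derive (fun x => mapX bX bY uX uY K beta h x Y) X =
  (1 + p*bX) / (1 + p * (bX / K * X + bX / K * Y + uX + beta * Y))
  - X * (1+p*bX) * (p * bX / K) / (1 + p * (bX / K * X + bX / K * Y + uX + beta * Y))^2.
Proof.
  intros Hd. apply is_derive_unique. unfold mapX. fold p.
  auto_derive; [exact Hd|]. field; repeat split; auto; intro E; apply Hd; apply (Rmult_eq_reg_l K); auto; rewrite Rmult_0_r, <- E; field; auto.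
Qed.

Lemma dfY X Y : 1 + p * (bX / K * X + bX / K * Y + uX + beta * Y) <> 0 ->
  Derive (fun y => mapX bX bY uX uY K beta h X y) Y =
  - X * (1+p*bX) * (p * (bX / K + beta)) / (1 + p * (bX / K * X + bX / K * Y + uX + beta * Y))^2.
Proof.
  intros Hd. apply is_derive_unique. unfold mapX. fold p.
  auto_derive; [exact Hd|]. field; repeat split; auto; intro E; apply Hd; apply (Rmult_eq_reg_l K); auto; rewrite Rmult_0_r, <- E; field; auto.
Qed.

Lemma dgX X Y : 1 + q * (bY / K * X + bY / K * Y + uY) <> 0 ->
  Derive (fun x => mapY bX bY uX uY K beta h x Y) X =
  Y * (q*beta * (1 + q * (bY / K * X + bY / K * Y + uY)) - (1 + q*(bY + beta*X)) * (q*bY/K))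
   / (1 + q * (bY / K * X + bY / K * Y + uY))^2.
Proof.
  intros Hd. apply is_derive_unique. unfold mapY. fold q.
  auto_derive; [exact Hd|]. field; repeat split; auto; intro E; apply Hd; apply (Rmult_eq_reg_l K); auto; rewrite Rmult_0_r, <- E; field; auto.
Qed.

Lemma dgY X Y : 1 + q * (bY / K * X + bY / K * Y + uY) <> 0 ->
  Derive (fun y => mapY bX bY uX uY K beta h X y) Y =
  (1 + q*(bY + beta*X)) / (1 + q * (bY / K * X + bY / K * Y + uY))
  - Y * (1 + q*(bY + beta*X)) * (q*bY/K) / (1 + q * (bY / K * X + bY / K * Y + uY))^2.
Proof.
  intros Hd. apply is_derive_unique. unfold mapY. fold q.
  auto_derive; [exact Hd|]. field; repeat split; auto; intro E; apply Hd; apply (Rmult_eq_reg_l K); auto; rewrite Rmult_0_r, <- E; field; auto.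
Qed.
End D.

Lemma interior_arith (bX bY uY K beta P Q X Y : R) :
  0 < bX -> 0 < bY -> 0 < uY -> 0 < K -> 0 < beta -> 0 < P -> 0 < Q -> 0 < X -> 0 < Y ->
  X + Y < K -> beta * X < uY -> uY < bY -> bY <= bX ->
  P * bX < 1 -> Q * (bY + beta * X) < 1 -> P * (beta*K*uY + bX*bY) < bY ->
  let a := 1 - P*X*bX/K in let b := - (P*X*(bX/K+beta)) in
  let c := Q*Y*(beta - bY/K) in let d := 1 - Q*Y*bY/K in
  1 - (a+d) + (a*d - b*c) > 0 /\ 1 + (a+d) + (a*d-b*c) > 0 /\ a*d - b*c < 1.
Proof.
  intros. set (a0 := P*X*bX/K). set (d0 := Q*Y*bY/K).
  assert (E : a*d - b*c = 1 - a0 - d0 + P*Q*X*Y*beta*(beta*K + bX - bY)/K).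
  { unfold a, b, c, d, a0, d0. field. lra. }
  assert (Hpos : 0 < P*Q*X*Y*beta*(beta*K + bX - bY)/K).
  { apply Rdiv_lt_0_compat; [|lra]. repeat apply Rmult_lt_0_compat; nra. }
  assert (Ha0 : 0 < a0 < 1).
  { unfold a0. split. apply Rdiv_lt_0_compat; [|lra]. repeat apply Rmult_lt_0_compat; nra.
    apply Rmult_lt_reg_r with K; [lra|]. replace (P*X*bX/K*K) with ((P*bX)*X) by (field; lra). nra. }
  assert (Hd0 : 0 < d0 < 1).
  { unfold d0. split. apply Rdiv_lt_0_compat; [|lra]. repeat apply Rmult_lt_0_compat; nra.
    apply Rmult_lt_reg_r with K; [lra|]. replace (Q*Y*bY/K*K) with ((Q*bY)*Y) by (field; lra).
    assert (0 < Q*(beta*X)) by (apply Rmult_lt_0_compat; nra). assert (Q*bY < 1) by nra. nra. }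
  assert (Hk : P*Q*X*Y*beta*(beta*K + bX - bY) < P*X*bX + Q*Y*bY).
  { assert (S1 : P*X*bX * (Q*(bY+beta*X)) + Q*Y*bY * (P*(beta*K*uY/bY + bX)) < P*X*bX + Q*Y*bY).
    { assert (P*(beta*K*uY/bY + bX) < 1).
      { apply Rmult_lt_reg_r with bY; [lra|].
        replace (P * (beta * K * uY / bY + bX) * bY) with (P * (beta*K*uY + bX*bY)) by (field; lra). lra. }
      assert (0 < P*X*bX) by (repeat apply Rmult_lt_0_compat; lra).
      assert (0 < Q*Y*bY) by (repeat apply Rmult_lt_0_compat; lra).
      nra. }
    replace (P*X*bX * (Q*(bY+beta*X)) + Q*Y*bY * (P*(beta*K*uY/bY + bX)))
      with (P*Q*(X*bX*(bY+beta*X) + Y*(beta*K*uY + bX*bY))) in S1 by (field; lra).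
    assert (PQ : 0 < P*Q) by nra.
    assert (T1 : X*Y*beta*(beta*K + bX - bY) < X*bX*(bY+beta*X) + Y*(beta*K*uY + bX*bY)).
    { assert (beta*K*Y*(beta*X) < beta*K*Y*uY) by (apply Rmult_lt_compat_l; [repeat apply Rmult_lt_0_compat|]; lra).
      assert (bX*Y*(beta*X) < bX*Y*bY) by (apply Rmult_lt_compat_l; [repeat apply Rmult_lt_0_compat|]; lra).
      assert (0 < X*Y*beta*bY) by (repeat apply Rmult_lt_0_compat; lra).
      assert (0 < X*bX*(bY+beta*X)) by (repeat apply Rmult_lt_0_compat; nra).
      nra. }
    assert (P*Q*(X*Y*beta*(beta*K + bX - bY)) < P*Q*(X*bX*(bY+beta*X) + Y*(beta*K*uY + bX*bY)))
      by (apply Rmult_lt_compat_l; lra).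
    nra. }
  assert (Hk2 : P*Q*X*Y*beta*(beta*K + bX - bY)/K < a0 + d0).
  { unfold a0, d0. apply Rmult_lt_reg_r with K; [lra|].
    replace ((P * X * bX / K + Q * Y * bY / K) * K) with (P*X*bX + Q*Y*bY) by (field; lra).
    replace (P * Q * X * Y * beta * (beta * K + bX - bY) / K * K) with (P * Q * X * Y * beta * (beta * K + bX - bY)) by (field; lra).
    lra. }
  assert (Hsum : a + d = 2 - a0 - d0) by (unfold a, d, a0, d0; ring).
  rewrite E, Hsum. lra.
Qed.

Lemma case4 bX bY uX uY K beta h X Y : 0<bX -> 0<bY -> 0<uX -> 0<uY -> 0<K -> 0<beta -> 0<h ->
  uY < bY -> bY <= bX -> 0 < X -> 0 < Y ->
  bX = bX/K*(X+Y) + uX + beta*Y -> bY + beta*X = bY/K*(X+Y) + uY ->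
  0 < phi1 bX bY uX uY K beta h -> phi1 bX bY uX uY K beta h * (beta*K*uY) < bY ->
  las_fixed_point (mapX bX bY uX uY K beta h) (mapY bX bY uX uY K beta h) X Y.
Proof.
  intros HbX HbY HuX HuY HK Hb Hh H1 H2 HX HY E1 E2 Hp1 Hp2.
  assert (HS : X + Y < K).
  { assert (bX/K*(X+Y) < bX) by nra.
    apply Rmult_lt_reg_l with (bX/K). apply Rdiv_lt_0_compat; lra.
    replace (bX/K*K) with bX by (field; lra). lra. }
  assert (HbXu : beta * X < uY).
  { assert (bY/K*(X+Y) < bY).
    { replace bY with (bY/K*K) at 2 by (field; lra). apply Rmult_lt_compat_l; [apply Rdiv_lt_0_compat|]; lra. }
    lra. }
  assert (I1 : bX / K * X + bX / K * Y + uX + beta * Y = bX) by (rewrite E1 at 3; field; lra).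
  assert (I2 : bY / K * X + bY / K * Y + uY = bY + beta * X) by (rewrite E2; field; lra).
  assert (KK : K <> 0) by lra.
  set (p := phi1 bX bY uX uY K beta h) in *.
  assert (Hq : 0 < phi2 h) by (unfold phi2; lra).
  set (q := phi2 h) in *.
  assert (0 < p*bX) by (apply Rmult_lt_0_compat; lra). assert (A0 : 0 < 1 + p*bX) by lra.
  assert (0 < q*(bY + beta*X)) by (apply Rmult_lt_0_compat; nra). assert (B0 : 0 < 1 + q*(bY + beta*X)) by lra.
  split; [|split].
  - unfold mapX. cbv zeta. fold p. rewrite I1. field. lra.
  - unfold mapY. cbv zeta. fold q. rewrite I2. field. lra.
  - intros l Hl.
    assert (D1 : 1 + p * (bX / K * X + bX / K * Y + uX + beta * Y) <> 0) by (rewrite I1; lra).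
    assert (D2 : 1 + q * (bY / K * X + bY / K * Y + uY) <> 0) by (rewrite I2; lra).
    rewrite (dfX bX bY uX uY K beta h KK X Y D1), (dfY bX bY uX uY K beta h KK X Y D1), (dgX bX bY uX uY K beta h KK X Y D2), (dgY bX bY uX uY K beta h KK X Y D2) in Hl.
    rewrite ?I1, ?I2 in Hl. fold p in Hl; change (phi2 h) with q in Hl. clearbody p q.
    pose (P := p / (1 + p*bX)). pose (Q := q / (1 + q*(bY+beta*X))).
    match type of Hl with is_eigenvalue2 ?a ?b ?c ?d _ =>
      replace a with (1 - P*X*bX/K) in Hl by (unfold P; field; lra);
      replace b with (- (P*X*(bX/K+beta))) in Hl by (unfold P; field; lra);
      replace c with (Q*Y*(beta - bY/K)) in Hl by (unfold Q; field; lra);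
      replace d with (1 - Q*Y*bY/K) in Hl by (unfold Q; field; lra) end.
    assert (HP : 0 < P) by (unfold P; apply Rdiv_lt_0_compat; lra).
    assert (HQ : 0 < Q) by (unfold Q; apply Rdiv_lt_0_compat; lra).
    assert (HP1 : P * bX < 1).
    { unfold P. apply Rmult_lt_reg_r with (1+p*bX); [lra|].
      replace (p / (1 + p * bX) * bX * (1 + p * bX)) with (p*bX) by (field; lra). lra. }
    assert (HQ1 : Q * (bY + beta * X) < 1).
    { unfold Q. apply Rmult_lt_reg_r with (1+q*(bY+beta*X)); [lra|].
      replace (q / (1 + q * (bY + beta * X)) * (bY + beta * X) * (1 + q * (bY + beta * X))) with (q*(bY+beta*X)) by (field; lra). lra. }
    assert (HP2 : P * (beta*K*uY + bX*bY) < bY).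
    { unfold P. apply Rmult_lt_reg_r with (1+p*bX); [lra|].
      replace (p / (1 + p * bX) * (beta * K * uY + bX * bY) * (1 + p * bX)) with (p*(beta*K*uY) + p*bX*bY) by (field; lra).
      nra. }
    destruct (interior_arith bX bY uY K beta P Q X Y) as [J1 [J2 J3]]; try lra.
    exact (jury _ _ _ _ _ J1 J2 J3 Hl).
Qed.

Lemma jury_diag a b c d (l : C) : -1 < a < 1 -> -1 < d < 1 -> b*c = 0 ->
  is_eigenvalue2 a b c d l -> Cmod l < 1.
Proof. intros Ha Hd Hbc. apply jury; rewrite Hbc; nra. Qed.

Lemma frac_bounds n m : 0 < n < m -> -1 < n / m < 1.
Proof.
  intros [H1 H2]. assert (0 < n/m) by (apply Rdiv_lt_0_compat; lra). split; [lra|].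
  apply Rmult_lt_reg_r with m; [lra|]. replace (n/m*m) with n by (field; lra). lra.
Qed.

Lemma case1 bX bY uX uY K beta h : 0<bX -> 0<bY -> 0<uX -> 0<uY -> 0<K -> 0<h ->
  bX < uX -> bY < uY -> 0 < phi1 bX bY uX uY K beta h ->
  las_fixed_point (mapX bX bY uX uY K beta h) (mapY bX bY uX uY K beta h) 0 0.
Proof.
  intros HbX HbY HuX HuY HK Hh H1 H2 Hp.
  assert (KK : K <> 0) by lra.
  set (p := phi1 bX bY uX uY K beta h) in *.
  assert (Hq : 0 < phi2 h) by (unfold phi2; lra).
  set (q := phi2 h) in *.
  assert (0 < p*uX) by (apply Rmult_lt_0_compat; lra).
  assert (0 < q*uY) by (apply Rmult_lt_0_compat; lra).
  assert (0 < p*bX) by (apply Rmult_lt_0_compat; lra).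
  assert (0 < q*bY) by (apply Rmult_lt_0_compat; lra).
  split; [|split].
  - unfold mapX, Rdiv. cbv zeta. ring.
  - unfold mapY, Rdiv. cbv zeta. ring.
  - intros l Hl.
    assert (I1 : bX / K * 0 + bX / K * 0 + uX + beta * 0 = uX) by ring.
    assert (I2 : bY / K * 0 + bY / K * 0 + uY = uY) by ring.
    assert (D1 : 1 + p * (bX / K * 0 + bX / K * 0 + uX + beta * 0) <> 0) by (rewrite I1; lra).
    assert (D2 : 1 + q * (bY / K * 0 + bY / K * 0 + uY) <> 0) by (rewrite I2; lra).
    rewrite (dfX bX bY uX uY K beta h KK 0 0 D1), (dfY bX bY uX uY K beta h KK 0 0 D1),
      (dgX bX bY uX uY K beta h KK 0 0 D2), (dgY bX bY uX uY K beta h KK 0 0 D2) in Hl.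
    rewrite ?I1, ?I2 in Hl. fold p in Hl; change (phi2 h) with q in Hl. clearbody p q.
    match type of Hl with is_eigenvalue2 ?a ?b ?c ?d _ =>
      replace a with ((1+p*bX)/(1+p*uX)) in Hl by (field; lra);
      replace b with 0 in Hl by (field; lra);
      replace c with 0 in Hl by (field; lra);
      replace d with ((1+q*bY)/(1+q*uY)) in Hl by (field; lra) end.
    refine (jury_diag _ _ _ _ _ _ _ _ Hl); [apply frac_bounds; nra | apply frac_bounds; nra | ring].
Qed.

Lemma case2 bX bY uX uY K beta h : 0<bX -> 0<bY -> 0<uX -> 0<uY -> 0<K -> 0<beta -> 0<h ->
  bX > uX -> basicR0 bX bY uX uY K beta < 1 -> 0 < phi1 bX bY uX uY K beta h ->
  las_fixed_point (mapX bX bY uX uY K beta h) (mapY bX bY uX uY K beta h) (Xbar bX uX K) 0.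
Proof.
  intros HbX HbY HuX HuY HK Hb Hh H1 H2 Hp.
  assert (KK : K <> 0) by lra.
  unfold basicR0 in H2. set (Xb := Xbar bX uX K) in *.
  assert (HXb : 0 < Xb).
  { unfold Xb, Xbar. apply Rmult_lt_0_compat; [lra|].
    assert (uX/bX < 1); [|lra]. apply Rmult_lt_reg_r with bX; [lra|].
    replace (uX/bX*bX) with uX by (field; lra). lra. }
  assert (HR : bY * uX / bX + beta * Xb < uY).
  { apply Rmult_lt_compat_r with (r := uY) in H2; [|lra].
    replace ((bY / bX * (uX / uY) + beta / uY * Xb) * uY) with (bY * uX / bX + beta * Xb) in H2 by (field; lra).
    lra. }
  assert (I1 : bX / K * Xb + bX / K * 0 + uX + beta * 0 = bX) by (unfold Xb, Xbar; field; lra).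
  assert (I2 : bY / K * Xb + bY / K * 0 + uY = bY - bY * uX / bX + uY) by (unfold Xb, Xbar; field; lra).
  set (p := phi1 bX bY uX uY K beta h) in *.
  assert (Hq : 0 < phi2 h) by (unfold phi2; lra).
  set (q := phi2 h) in *.
  assert (0 < p*uX) by (apply Rmult_lt_0_compat; lra).
  assert (0 < p*bX) by (apply Rmult_lt_0_compat; lra).
  assert (0 < bY * uX / bX) by (apply Rdiv_lt_0_compat; nra).
  assert (0 < q*(bY + beta*Xb)) by (apply Rmult_lt_0_compat; nra).
  assert (q*(bY + beta*Xb) < q*(bY - bY * uX / bX + uY)) by (apply Rmult_lt_compat_l; lra).
  split; [|split].
  - unfold mapX. cbv zeta. fold p. rewrite I1. field. lra.
  - unfold mapY, Rdiv. cbv zeta. ring.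
  - intros l Hl.
    assert (D1 : 1 + p * (bX / K * Xb + bX / K * 0 + uX + beta * 0) <> 0) by (rewrite I1; lra).
    assert (D2 : 1 + q * (bY / K * Xb + bY / K * 0 + uY) <> 0) by (rewrite I2; lra).
    rewrite (dfX bX bY uX uY K beta h KK Xb 0 D1), (dfY bX bY uX uY K beta h KK Xb 0 D1),
      (dgX bX bY uX uY K beta h KK Xb 0 D2), (dgY bX bY uX uY K beta h KK Xb 0 D2) in Hl.
    rewrite ?I1, ?I2 in Hl. fold p in Hl; change (phi2 h) with q in Hl. clearbody p q.
    match type of Hl with is_eigenvalue2 ?a ?b ?c ?d _ =>
      replace a with ((1+p*uX)/(1+p*bX)) in Hl by (unfold Xb, Xbar; field; lra);
      replace c with 0 in Hl by (unfold Rdiv; ring);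
      replace d with ((1+q*(bY + beta*Xb))/(1+q*(bY - bY * uX / bX + uY))) in Hl by (unfold Rdiv; ring) end.
    refine (jury_diag _ _ _ _ _ _ _ _ Hl); [apply frac_bounds; nra | apply frac_bounds; nra | ring].
Qed.

Lemma case3 bX bY uX uY K beta h : 0<bX -> 0<bY -> 0<uX -> 0<uY -> 0<K -> 0<beta -> 0<h ->
  bY > uY -> bX * uY / bY < uX + beta * K * (1 - uY / bY) -> 0 < phi1 bX bY uX uY K beta h ->
  las_fixed_point (mapX bX bY uX uY K beta h) (mapY bX bY uX uY K beta h) 0 (Ybar bY uY K).
Proof.
  intros HbX HbY HuX HuY HK Hb Hh H1 H2 Hp.
  assert (KK : K <> 0) by lra.
  set (Yb := Ybar bY uY K) in *.
  assert (HYb : 0 < Yb).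
  { unfold Yb, Ybar. apply Rmult_lt_0_compat; [lra|].
    assert (uY/bY < 1); [|lra]. apply Rmult_lt_reg_r with bY; [lra|].
    replace (uY/bY*bY) with uY by (field; lra). lra. }
  assert (I1 : bX / K * 0 + bX / K * Yb + uX + beta * Yb = bX - bX * uY / bY + uX + beta * K * (1 - uY / bY))
    by (unfold Yb, Ybar; field; lra).
  assert (I2 : bY / K * 0 + bY / K * Yb + uY = bY) by (unfold Yb, Ybar; field; lra).
  set (p := phi1 bX bY uX uY K beta h) in *.
  assert (Hq : 0 < phi2 h) by (unfold phi2; lra).
  set (q := phi2 h) in *.
  assert (0 < q*uY) by (apply Rmult_lt_0_compat; lra).
  assert (0 < q*bY) by (apply Rmult_lt_0_compat; lra).
  assert (0 < p*bX) by (apply Rmult_lt_0_compat; lra).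
  assert (p*bX < p*(bX - bX * uY / bY + uX + beta * K * (1 - uY / bY))) by (apply Rmult_lt_compat_l; lra).
  split; [|split].
  - unfold mapX, Rdiv. cbv zeta. ring.
  - unfold mapY. cbv zeta. change (phi2 h) with q. rewrite I2. field. lra.
  - intros l Hl.
    assert (D1 : 1 + p * (bX / K * 0 + bX / K * Yb + uX + beta * Yb) <> 0) by (rewrite I1; lra).
    assert (D2 : 1 + q * (bY / K * 0 + bY / K * Yb + uY) <> 0) by (rewrite I2; lra).
    rewrite (dfX bX bY uX uY K beta h KK 0 Yb D1), (dfY bX bY uX uY K beta h KK 0 Yb D1),
      (dgX bX bY uX uY K beta h KK 0 Yb D2), (dgY bX bY uX uY K beta h KK 0 Yb D2) in Hl.
    rewrite ?I1, ?I2 in Hl. fold p in Hl; change (phi2 h) with q in Hl. clearbody p q.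
    match type of Hl with is_eigenvalue2 ?a ?b ?c ?d _ =>
      replace a with ((1+p*bX)/(1+p*(bX - bX * uY / bY + uX + beta * K * (1 - uY / bY)))) in Hl by (unfold Rdiv; ring);
      replace b with 0 in Hl by (unfold Rdiv; ring);
      replace d with ((1+q*uY)/(1+q*bY)) in Hl by (unfold Yb, Ybar; field; lra) end.
    refine (jury_diag _ _ _ _ _ _ _ _ Hl); [apply frac_bounds; nra | apply frac_bounds; nra | ring].
Qed.

Theorem theorem5 (bX bY uX uY K beta : R) :
  0 < bX -> 0 < bY -> 0 < uX -> 0 < uY -> 0 < K -> 0 < beta ->
  uY > uX -> bX >= bY ->
  forall h : R, 0 < h ->
  let f := mapX bX bY uX uY K beta h in
  let g := mapY bX bY uX uY K beta h in
  (bX < uX -> bY < uY -> las_fixed_point f g 0 0) /\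
  (bX > uX -> basicR0 bX bY uX uY K beta < 1 ->
     las_fixed_point f g (Xbar bX uX K) 0) /\
  (bY > uY -> bX * uY / bY < uX + beta * K * (1 - uY / bY) ->
     las_fixed_point f g 0 (Ybar bY uY K)) /\
  (bX > uX -> bY > uY -> bX * uY / bY > uX + beta * K * (1 - uY / bY) ->
     basicR0 bX bY uX uY K beta > 1 ->
     las_fixed_point f g (XHstar bX bY uX uY K beta) (YHstar bX bY uX uY K beta)).
Proof.
  intros HbX HbY HuX HuY HK Hb H1 H2 h Hh f g.
  assert (Hc : 0 < beta * K * uY / bY) by (apply Rdiv_lt_0_compat; [repeat apply Rmult_lt_0_compat|]; lra).
  assert (He : 0 < exp (- (beta * K * uY / bY) * h) < 1).
  { split; [apply exp_pos|]. rewrite <- exp_0. apply exp_increasing. nra. }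
  assert (HbKu : 0 < beta * K * uY) by (repeat apply Rmult_lt_0_compat; lra).
  assert (Hp : 0 < phi1 bX bY uX uY K beta h).
  { unfold phi1. apply Rdiv_lt_0_compat; [apply Rmult_lt_0_compat|]; lra. }
  assert (Hp2 : phi1 bX bY uX uY K beta h * (beta*K*uY) < bY).
  { unfold phi1. replace (bY * (1 - exp (- (beta * K * uY / bY) * h)) / (beta * K * uY) * (beta * K * uY))
      with (bY * (1 - exp (- (beta * K * uY / bY) * h))) by (field; lra). nra. }
  split; [|split; [|split]].
  - intros. apply case1; lra.
  - intros. apply case2; lra.
  - intros. apply case3; lra.
  - intros H3 H4 H5 H6.
    assert (N1 : bX*uY > uX*bY + beta*K*(bY-uY)).
    { apply Rmult_gt_compat_r with (r := bY) in H5; [|lra].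
      replace (bX*uY/bY*bY) with (bX*uY) in H5 by (field; lra).
      replace ((uX + beta*K*(1-uY/bY))*bY) with (uX*bY + beta*K*(bY-uY)) in H5 by (field; lra). lra. }
    assert (N2 : bY*uX + beta*K*(bX-uX) > bX*uY).
    { unfold basicR0, Xbar in H6. apply Rmult_gt_compat_r with (r := bX*uY) in H6; [|nra].
      replace ((bY / bX * (uX / uY) + beta / uY * (K * (1 - uX / bX))) * (bX * uY))
        with (bY*uX + beta*K*(bX-uX)) in H6 by (field; lra). lra. }
    assert (Dn : 0 < beta * (beta * K + bX - bY)) by (apply Rmult_lt_0_compat; nra).
    apply case4; try lra.
    + unfold XHstar. apply Rdiv_lt_0_compat; lra.
    + unfold YHstar. apply Rdiv_lt_0_compat; lra.
    + unfold XHstar, YHstar. field. repeat split; nra.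
    + unfold XHstar, YHstar. field. repeat split; nra.
Qed.
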